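(* Let $a<b$, $c<d$, $C\in\mathbb{R}\setminus\{0\}$, $\Delta=\max\{b-a,d-c\}$, and let $N\ge2$ be an integer. Let $(p,q)$ be a pair of real sequences with $p_0=q_0$ and with $\|(p,q)\|_\gamma<\infty$ for some integer $\gamma\ge1$, where $$\|(p,q)\|_\gamma=\max\Big\{\sup_{n\ge0}\Big|\frac{(n!)^2p_n}{(\gamma|C|\Delta)^n}\Big|,\ \sup_{n\ge0}\Big|\frac{(n!)^2q_n}{(\gamma|C|\Delta)^n}\Big|\Big\}.$$ Let $k$ be the solution of the Goursat problem $\partial^2k/\partial s\partial t=Ck$ on $[a,b]\times[c,d]$ with $k(s,c)=\sum_{n\ge0}p_n(s-a)^n$ and $k(a,t)=\sum_{n\ge0}q_n(t-c)^n$. For $0\le n\le N$ set $$\hat p_n=\sum_{k=0}^{n}p_k\frac{(C(d-c))^{n-k}k!}{(n-k)!\,n!}+\sum_{k=1}^{N}q_k\frac{C^n(d-c)^{n+k}k!}{(n+k)!\,n!},\qquad \hat q_n=\sum_{k=0}^{n}q_k\frac{(C(b-a))^{n-k}k!}{(n-k)!\,n!}+\sum_{k=1}^{N}p_k\frac{C^n(b-a)^{n+k}k!}{(n+k)!\,n!},$$ and $\hat k^N(b,d)=\frac12\sum_{n=0}^N\big(\hat p_n(b-a)^n+\hat q_n(d-c)^n\big)$. Then $$|k(b,d)-\hat k^N(b,d)|\le 2\|(p,q)\|_\gamma\,I_0(2\sqrt{\gamma|C|}\Delta)\,I_0(2\sqrt{(\gamma+1)|C|}\Delta)\,\frac{(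|C|\Delta^2)^{N+1}(\gamma+1)^{N+1}}{[(N+1)!]^2}.$$
   Context: The solution of the Goursat problem is the continuous function $k$ on $[a,b]\times[c,d]$ with $k(s,t)=k(s,c)+k(a,t)-k(a,c)+C\int_a^s\int_c^t k(r,w)\,dw\,dr$. $I_0$ is the zero-order modified Bessel function of the first kind, $I_0(2z)=\sum_{k\ge0}z^{2k}/(k!)^2$. The quantities $\hat p,\hat q$ are the order-$N$ truncations of the boundary coefficient map applied to the order-$N$ truncated input coefficients. *)

(* Defs.v *)
From Stdlib Require Import Reals Arith Factorial.
From Coquelicot Require Import Coquelicot.
Open Scope R_scope.

Definition I0 (x : R) : R :=
  Series (fun k => (x / 2) ^ (2 * k) / (INR (fact k)) ^ 2).

Definition pq_weighted (gamma C Delta : R) (p q : nat -> R) (n : nat) : R :=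
  Rmax (Rabs ((INR (fact n)) ^ 2 * p n / (gamma * Rabs C * Delta) ^ n))
       (Rabs ((INR (fact n)) ^ 2 * q n / (gamma * Rabs C * Delta) ^ n)).

Definition pq_norm_Rbar (gamma C Delta : R) (p q : nat -> R) : Rbar :=
  Sup_seq (pq_weighted gamma C Delta p q).

(* Its real value (meaningful when the supremum is finite). *)
Definition pq_norm (gamma C Delta : R) (p q : nat -> R) : R :=
  real (pq_norm_Rbar gamma C Delta p q).

Definition cont_on_rect (k : R -> R -> R) (a b c d : R) : Prop :=
  forall s t, a <= s <= b -> c <= t <= d ->
    filterlim (fun z : R * R => k (fst z) (snd z))
      (within (fun z : R * R => a <= fst z <= b /\ c <= snd z <= d)
              (locally (s, t)))
      (locally (k s t)).

(* k solves the Goursat problem d^2k/dsdt = C k on [a,b]x[c,d] in the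
   integral-equation sense of the paper. *)
Definition goursat_solution (k : R -> R -> R) (a b c d C : R) : Prop :=
  cont_on_rect k a b c d /\
  forall s t, a <= s <= b -> c <= t <= d ->
    k s t = k s c + k a t - k a c
            + C * RInt (fun r => RInt (fun w => k r w) c t) a s.

Definition p_hat (N : nat) (a b c d C : R) (p q : nat -> R) (n : nat) : R :=
  sum_n (fun j => p j * (C * (d - c)) ^ (n - j) * INR (fact j)
                   / (INR (fact (n - j)) * INR (fact n))) n
  + sum_n_m (fun j => q j * C ^ n * (d - c) ^ (n + j) * INR (fact j)
                   / (INR (fact (n + j)) * INR (fact n))) 1 N.

Definition q_hat (N : nat) (a b c d C : R) (p q : nat -> R) (n : nat) : R :=
  sum_n (fun j => q j * (C * (b - a)) ^ (n - j) * INR (fact j)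
                   / (INR (fact (n - j)) * INR (fact n))) n
  + sum_n_m (fun j => p j * C ^ n * (b - a) ^ (n + j) * INR (fact j)
                   / (INR (fact (n + j)) * INR (fact n))) 1 N.

Definition k_hat (N : nat) (a b c d C : R) (p q : nat -> R) : R :=
  / 2 * sum_n (fun n => p_hat N a b c d C p q n * (b - a) ^ n
                        + q_hat N a b c d C p q n * (d - c) ^ n) N.

(* Main.v *)
Require Import Defs.
From Stdlib Require Import Reals Arith Factorial.
From Coquelicot Require Import Coquelicot.
From Stdlib Require Import Lra Lia Classical ClassicalEpsilon.
Open Scope R_scope.


Lemma ballR (x e y : R) : ball x e y <-> Rabs (y - x) < e.
Proof. split; intro H; exact H. Qed.

Definition inRect (a b c d x y : R) := a <= x <= b /\ c <= y <= d.

Lemma cont_eps (k : R -> R -> R) a b c d u v :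
  cont_on_rect k a b c d -> inRect a b c d u v ->
  forall eps : posreal, exists del : posreal, forall x y, inRect a b c d x y ->
    Rabs (x - u) < del -> Rabs (y - v) < del -> Rabs (k x y - k u v) < eps.
Proof.
  intros Hk [Hu Hv] eps.
  specialize (Hk u v Hu Hv).
  apply filterlim_locally with (eps := eps) in Hk.
  destruct Hk as [del Hdel].
  exists del. intros x y [Hx Hy] H1 H2.
  apply (Hdel (x, y)). split; simpl; apply ballR; auto. simpl. auto.
Qed.

Lemma unif_cont (k : R -> R -> R) a b c d :
  cont_on_rect k a b c d ->
  forall eps : posreal, exists del : posreal, forall x y x' y',
    inRect a b c d x y -> inRect a b c d x' y' ->
    Rabs (x - x') < del -> Rabs (y - y') < del -> Rabs (k x y - k x' y') < eps.
Proof.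
  intros Hk eps.
  assert (he2 : 0 < eps / 2) by (destruct eps; simpl; lra).
  set (e2 := mkposreal _ he2).
  assert (Hd : forall u v, {del : posreal | inRect a b c d u v -> forall x y, inRect a b c d x y ->
    Rabs (x - u) < del -> Rabs (y - v) < del -> Rabs (k x y - k u v) < e2}).
  { intros u v. apply constructive_indefinite_description.
    destruct (classic (inRect a b c d u v)) as [H|H].
    - destruct (cont_eps k a b c d u v Hk H e2) as [del Hdel]. exists del. intros _. exact Hdel.
    - exists (mkposreal 1 Rlt_0_1). intro; contradiction. }
  set (dl := fun u v => proj1_sig (Hd u v)).
  assert (Hdl : forall u v, 0 < dl u v / 2).
  { intros u v. unfold dl. destruct (proj1_sig (Hd u v)); simpl; lra. }
  destruct (compactness_value_2d a b c d (fun u v => mkposreal _ (Hdl u v))) as [d0 Hd0].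
  exists d0. intros x y x' y' Hxy Hxy' H1 H2.
  destruct Hxy as [Hx Hy].
  specialize (Hd0 x y Hx Hy).
  apply NNPP. intro Hn. apply Hd0. intros [u [v [Hu [Hv [Hxu [Hyv Hdu]]]]]].
  apply Hn. simpl in *.
  pose proof (proj2_sig (Hd u v) (conj Hu Hv)) as Huv. fold (dl u v) in Huv.
  pose proof (Hdl u v) as Hpos.
  assert (A1 : Rabs (k x y - k u v) < e2).
  { apply Huv. split; auto. lra. lra. }
  assert (A2 : Rabs (k x' y' - k u v) < e2).
  { apply Huv. exact Hxy'.
    - assert (Rabs (x' - u) <= Rabs (x' - x) + Rabs (x - u)) by
        (replace (x' - u) with ((x' - x) + (x - u)) by ring; apply Rabs_triang).
      rewrite Rabs_minus_sym in H1. lra.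
    - assert (Rabs (y' - v) <= Rabs (y' - y) + Rabs (y - v)) by
        (replace (y' - v) with ((y' - y) + (y - v)) by ring; apply Rabs_triang).
      rewrite Rabs_minus_sym in H2. lra. }
  simpl in A1, A2.
  replace (k x y - k x' y') with ((k x y - k u v) - (k x' y' - k u v)) by ring.
  eapply Rle_lt_trans. apply Rabs_triang. rewrite Rabs_Ropp.
  destruct eps; simpl in *; lra.
Qed.

Lemma k_bounded (k : R -> R -> R) a b c d :
  a <= b -> c <= d -> cont_on_rect k a b c d ->
  exists B, 0 <= B /\ forall x y, inRect a b c d x y -> Rabs (k x y) <= B.
Proof.
  intros Hab Hcd Hk.
  destruct (unif_cont k a b c d Hk (mkposreal 1 Rlt_0_1)) as [del Hdel]. simpl in Hdel.
  destruct del as [dl hdl]; simpl in *.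
  assert (H0 : 0 <= (b - a) / dl + (d - c) / dl).
  { apply Rplus_le_le_0_compat; apply Rdiv_le_0_compat; lra. }
  destruct (nfloor_ex _ H0) as [n [_ Hn]].
  set (m := S n).
  assert (Hm : 0 < INR m) by (apply lt_0_INR; unfold m; lia).
  assert (Hm1 : (b - a) / dl + (d - c) / dl < INR m) by (unfold m; rewrite S_INR; lra).
  assert (Hb1 : (b - a) / dl < INR m).
  { assert (0 <= (d-c)/dl) by (apply Rdiv_le_0_compat; lra). lra. }
  assert (Hd1 : (d - c) / dl < INR m).
  { assert (0 <= (b-a)/dl) by (apply Rdiv_le_0_compat; lra). lra. }
  apply Rlt_div_l in Hb1; [|lra]. apply Rlt_div_l in Hd1; [|lra].
  exists (Rabs (k a c) + INR m). split.
  { pose proof (Rabs_pos (k a c)). lra. }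
  intros x y [Hx Hy].
  set (u := (x - a) / INR m). set (v := (y - c) / INR m).
  assert (Hu : INR m * u = x - a) by (unfold u; field; lra).
  assert (Hv : INR m * v = y - c) by (unfold v; field; lra).
  assert (Hu0 : 0 <= u) by (unfold u; apply Rdiv_le_0_compat; lra).
  assert (Hv0 : 0 <= v) by (unfold v; apply Rdiv_le_0_compat; lra).
  assert (Hud : u < dl) by nra.
  assert (Hvd : v < dl) by nra.
  assert (Hind : forall i, (i <= m)%nat ->
    Rabs (k (a + INR i * u) (c + INR i * v) - k a c) <= INR i).
  { induction i as [|i IH]; intros Hi.
    - simpl. rewrite !Rmult_0_l, !Rplus_0_r, Rminus_diag, Rabs_R0. lra.
    - assert (Hi' : (i <= m)%nat) by lia. specialize (IH Hi').
      assert (HiR : INR (S i) <= INR m) by (apply le_INR; auto).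
      rewrite S_INR in *.
      assert (Hst : Rabs (k (a + (INR i + 1) * u) (c + (INR i + 1) * v)
                          - k (a + INR i * u) (c + INR i * v)) < 1).
      { apply Hdel.
        - split; split; pose proof (pos_INR i); nra.
        - split; split; pose proof (pos_INR i); nra.
        - replace (a + (INR i + 1) * u - (a + INR i * u)) with u by ring.
          rewrite Rabs_pos_eq; lra.
        - replace (c + (INR i + 1) * v - (c + INR i * v)) with v by ring.
          rewrite Rabs_pos_eq; lra. }
      eapply Rle_trans.
      2: { apply Rplus_le_compat. apply IH. apply Rlt_le, Hst. }
      eapply Rle_trans. 2: apply Rabs_triang. right. f_equal. ring. }
  specialize (Hind m (le_n m)).
  replace (a + INR m * u) with x in Hind by lra.
  replace (c + INR m * v) with y in Hind by lra.
  assert (Rabs (k x y) <= Rabs (k x y - k a c) + Rabs (k a c)).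
  { eapply Rle_trans. 2: apply Rabs_triang. right. f_equal. ring. }
  lra.
Qed.

Definition cl (a b x : R) := Rmax a (Rmin b x).

Lemma cl_in a b x : a <= b -> a <= cl a b x <= b.
Proof. intros H; unfold cl, Rmax, Rmin; repeat destruct Rle_dec; lra. Qed.

Lemma cl_id a b x : a <= x <= b -> cl a b x = x.
Proof. intros H; unfold cl, Rmax, Rmin; repeat destruct Rle_dec; lra. Qed.

Lemma cl_lip a b x y : a <= b -> Rabs (cl a b x - cl a b y) <= Rabs (x - y).
Proof.
  intros H; unfold cl, Rmax, Rmin; repeat destruct Rle_dec;
  unfold Rabs; repeat destruct Rcase_abs; lra.
Qed.

Lemma RInt_abs_bound (g : R -> R) c t M :
  c <= t -> ex_RInt g c t -> (forall w, c <= w <= t -> Rabs (g w) <= M) ->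
  Rabs (RInt g c t) <= M * (t - c).
Proof.
  intros Hct Hg HM.
  assert (E1 : RInt (fun _ => M) c t = M * (t - c)).
  { rewrite RInt_const. unfold scal; simpl; unfold mult; simpl. ring. }
  assert (E2 : RInt (fun _ => - M) c t = - M * (t - c)).
  { rewrite RInt_const. unfold scal; simpl; unfold mult; simpl. ring. }
  assert (L1 : RInt g c t <= RInt (fun _ => M) c t).
  { apply RInt_le; auto. apply ex_RInt_const. intros x Hx.
    specialize (HM x (conj (Rlt_le _ _ (proj1 Hx)) (Rlt_le _ _ (proj2 Hx)))).
    apply Rabs_le_between in HM. lra. }
  assert (L2 : RInt (fun _ => - M) c t <= RInt g c t).
  { apply RInt_le; auto. apply ex_RInt_const. intros x Hx.
    specialize (HM x (conj (Rlt_le _ _ (proj1 Hx)) (Rlt_le _ _ (proj2 Hx)))).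
    apply Rabs_le_between in HM. lra. }
  rewrite E1 in L1. rewrite E2 in L2. apply Rabs_le. lra.
Qed.

Lemma exR_cont (f : R -> R) a b :
  (forall z, Rmin a b <= z <= Rmax a b -> continuous f z) -> ex_RInt f a b.
Proof. intros H. apply (ex_RInt_continuous (V := R_CompleteNormedModule)). exact H. Qed.

Lemma RInt_minusR (f g : R -> R) a b : ex_RInt f a b -> ex_RInt g a b ->
  RInt (fun x => f x - g x) a b = RInt f a b - RInt g a b.
Proof. intros; apply (RInt_minus (V := R_CompleteNormedModule)); auto. Qed.
Lemma RInt_plusR (f g : R -> R) a b : ex_RInt f a b -> ex_RInt g a b ->
  RInt (fun x => f x + g x) a b = RInt f a b + RInt g a b.
Proof. intros; apply (RInt_plus (V := R_CompleteNormedModule)); auto. Qed.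
Lemma RInt_scalR (f : R -> R) a b l : ex_RInt f a b ->
  RInt (fun x => l * f x) a b = l * RInt f a b.
Proof. intros; apply (RInt_scal (V := R_CompleteNormedModule)); auto. Qed.
Lemma ex_RInt_minusR (f g : R -> R) a b : ex_RInt f a b -> ex_RInt g a b ->
  ex_RInt (fun x => f x - g x) a b.
Proof. intros; apply (ex_RInt_minus (V := R_NormedModule)); auto. Qed.
Lemma ex_RInt_plusR (f g : R -> R) a b : ex_RInt f a b -> ex_RInt g a b ->
  ex_RInt (fun x => f x + g x) a b.
Proof. intros; apply (ex_RInt_plus (V := R_NormedModule)); auto. Qed.
Lemma ex_RInt_scalR (f : R -> R) a b l : ex_RInt f a b ->
  ex_RInt (fun x => l * f x) a b.
Proof. intros; apply (ex_RInt_scal (V := R_NormedModule)); auto. Qed.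

Lemma kc_cont (k : R -> R -> R) a b c d r z :
  a <= b -> c <= d -> cont_on_rect k a b c d ->
  continuous (fun w => k (cl a b r) (cl c d w)) z.
Proof.
  intros Hab Hcd Hk. apply filterlim_locally. intros eps.
  destruct (cont_eps k a b c d (cl a b r) (cl c d z) Hk
     (conj (cl_in a b r Hab) (cl_in c d z Hcd)) eps) as [del Hdel].
  exists del. intros w Hw. apply ballR in Hw. apply ballR.
  apply Hdel. split; apply cl_in; auto.
  rewrite Rminus_diag, Rabs_R0. destruct del; simpl; lra.
  eapply Rle_lt_trans. apply cl_lip; auto. auto.
Qed.

Lemma k_int1 (k : R -> R -> R) a b c d r t :
  a <= b -> c <= d -> cont_on_rect k a b c d -> a <= r <= b -> c <= t <= d ->
  ex_RInt (fun w => k r w) c t.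
Proof.
  intros Hab Hcd Hk Hr Ht.
  apply ex_RInt_ext with (fun w => k (cl a b r) (cl c d w)).
  { intros x Hx. rewrite (cl_id a b r Hr), cl_id; auto.
    rewrite Rmin_left in Hx by lra. rewrite Rmax_right in Hx by lra. lra. }
  apply exR_cont. intros z _. apply kc_cont; auto.
Qed.

Lemma k_int2 (k : R -> R -> R) a b c d s t :
  a <= b -> c <= d -> cont_on_rect k a b c d -> a <= s <= b -> c <= t <= d ->
  ex_RInt (fun r => RInt (fun w => k r w) c t) a s.
Proof.
  intros Hab Hcd Hk Hs Ht.
  set (F := fun r => RInt (fun w => k (cl a b r) (cl c d w)) c t).
  apply ex_RInt_ext with F.
  { intros x Hx. unfold F. apply RInt_ext. intros w Hw.
    rewrite Rmin_left in Hx by lra. rewrite Rmax_right in Hx by lra.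
    rewrite Rmin_left in Hw by lra. rewrite Rmax_right in Hw by lra.
    rewrite cl_id by lra. rewrite cl_id by lra. reflexivity. }
  apply exR_cont. intros z _.
  apply filterlim_locally. intros eps.
  assert (he : 0 < eps / (t - c + 1)) by (destruct eps; simpl; apply Rdiv_lt_0_compat; lra).
  destruct (unif_cont k a b c d Hk (mkposreal _ he)) as [del Hdel]. simpl in Hdel.
  exists del. intros r Hr. apply ballR in Hr. apply ballR.
  unfold F. rewrite <- RInt_minusR.
  2,3: apply exR_cont; intros; apply kc_cont; auto.
  eapply Rle_lt_trans. apply RInt_abs_bound with (M := eps / (t - c + 1)). lra.
  apply ex_RInt_minusR; apply exR_cont; intros; apply kc_cont; auto.
  { intros w Hw. apply Rlt_le. apply Hdel.
    split; apply cl_in; auto. split; apply cl_in; auto.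
    eapply Rle_lt_trans. apply cl_lip; auto. auto.
    rewrite Rminus_diag, Rabs_R0. destruct del; simpl; lra. }
  destruct eps as [e he0]; simpl.
  apply Rlt_div_r in he; [|lra]. 
  replace (e / (t - c + 1) * (t - c)) with (e * ((t - c) / (t - c + 1))) by (field; lra).
  assert ((t - c) / (t - c + 1) < 1) by (apply Rlt_div_l; lra).
  nra.
Qed.

Definition pw (x : R) (i : nat) := x ^ i / INR (fact i).
Definition cf (p : nat -> R) (i n : nat) : R :=
  if (i <=? n)%nat then p (n - i)%nat * INR (fact (n - i)) / INR (fact n) else 0.

Lemma fact_pos n : 0 < INR (fact n).
Proof. apply lt_0_INR, lt_O_fact. Qed.
Lemma fact_ge1 n : 1 <= INR (fact n).
Proof. replace 1 with (INR 1) by reflexivity. apply le_INR. pose proof (lt_O_fact n). lia. Qed.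

Lemma exp_ser z : ex_series (fun n => z ^ n / INR (fact n)).
Proof.
  exists (exp z). pose proof (is_exp_Reals z) as H. unfold is_pseries in H.
  eapply is_series_ext. 2: exact H. intros n. simpl. rewrite pow_n_pow.
  unfold scal; simpl; unfold mult; simpl. unfold Rdiv. ring.
Qed.

Lemma exser_le (a b : nat -> R) : (forall n, Rabs (a n) <= b n) -> ex_series b -> ex_series a.
Proof. intros H Hb. apply (ex_series_le (V := R_CompleteNormedModule)) with b; auto. Qed.

Lemma cf_bound p Mn rho i n : 0 <= Mn -> 0 <= rho ->
  (forall n, Rabs (p n) <= Mn * rho ^ n / (INR (fact n)) ^ 2) ->
  Rabs (cf p i n) <= Mn * (rho + 1) ^ n / INR (fact n).
Proof.
  intros HM Hr Hp. unfold cf. destruct (Nat.leb_spec i n) as [Hin|Hin].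
  - specialize (Hp (n - i)%nat).
    pose proof (fact_pos (n - i)) as F1. pose proof (fact_pos n) as F2.
    pose proof (fact_ge1 (n - i)) as F3.
    unfold Rdiv. rewrite !Rabs_mult. rewrite (Rabs_pos_eq (INR (fact (n-i)))) by lra.
    rewrite (Rabs_pos_eq (/ INR (fact n))) by (apply Rlt_le, Rinv_0_lt_compat; lra).
    assert (E1 : rho ^ (n - i) <= (rho + 1) ^ n).
    { apply Rle_trans with ((rho + 1) ^ (n - i)).
      apply pow_incr; lra. apply Rle_pow; [lra| lia]. }
    assert (Hp' : Rabs (p (n - i)%nat) * INR (fact (n - i)) <= Mn * rho ^ (n - i)).
    { apply Rmult_le_compat_r with (r := INR (fact (n - i))) in Hp; [|lra].
      eapply Rle_trans. exact Hp. unfold Rdiv. rewrite Rmult_assoc.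
      replace (/ INR (fact (n - i)) ^ 2 * INR (fact (n - i))) with (/ INR (fact (n - i))) by (field; lra).
      rewrite <- (Rmult_1_r (Mn * rho ^ (n - i))) at 2. apply Rmult_le_compat_l.
      apply Rmult_le_pos; auto. apply pow_le; auto.
      rewrite <- Rinv_1. apply Rinv_le_contravar; lra. }
    apply Rmult_le_compat_r. apply Rlt_le, Rinv_0_lt_compat; lra.
    eapply Rle_trans. exact Hp'. apply Rmult_le_compat_l; auto.
  - rewrite Rabs_R0. apply Rmult_le_pos. apply Rmult_le_pos; auto. apply pow_le; lra.
    apply Rlt_le, Rinv_0_lt_compat, fact_pos.
Qed.

Lemma cf_rad p Mn rho i x : 0 <= Mn -> 0 <= rho ->
  (forall n, Rabs (p n) <= Mn * rho ^ n / (INR (fact n)) ^ 2) ->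
  Rbar_lt (Rabs x) (CV_radius (cf p i)).
Proof.
  intros HM Hr Hp.
  set (y := Rabs x + 1).
  assert (Hd : CV_disk (cf p i) y).
  { unfold CV_disk.
    apply exser_le with (fun n => Mn * (((rho + 1) * y) ^ n / INR (fact n))).
    2: { apply (ex_series_scal_l (V := R_NormedModule) Mn). apply exp_ser. }
    intros n. rewrite Rabs_Rabsolu.
    rewrite Rabs_mult. pose proof (cf_bound p Mn rho i n HM Hr Hp).
    assert (Hy : 0 <= y) by (unfold y; pose proof (Rabs_pos x); lra).
    rewrite (Rabs_pos_eq (y ^ n)) by (apply pow_le; auto).
    rewrite Rpow_mult_distr.
    replace (Mn * ((rho + 1) ^ n * y ^ n / INR (fact n))) with
      (Mn * (rho + 1) ^ n / INR (fact n) * y ^ n) by (unfold Rdiv; ring).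
    apply Rmult_le_compat_r; auto. apply pow_le; auto. }
  pose proof (proj1 (Lub_Rbar_correct (CV_disk (cf p i))) y Hd) as Hle.
  fold (CV_radius (cf p i)) in Hle.
  destruct (CV_radius (cf p i)) as [r| |]; simpl in *; auto.
  unfold y in Hle; lra.
Qed.

Lemma cf_derive p i n : PS_derive (cf p (S i)) n = cf p i n.
Proof.
  unfold PS_derive, cf. simpl (S i <=? S n)%nat.
  destruct (i <=? n)%nat; [|ring].
  replace (S n - S i)%nat with (n - i)%nat by lia.
  rewrite fact_simpl, mult_INR. pose proof (fact_pos n). rewrite S_INR.
  pose proof (pos_INR n). field. lra.
Qed.

Lemma cf_S0 p i : cf p (S i) 0 = 0.
Proof. reflexivity. Qed.

Lemma cf_0 p n : cf p 0 n = p n.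
Proof. unfold cf. simpl. rewrite Nat.sub_0_r. pose proof (fact_pos n). field. lra. Qed.


Lemma PS_is_derive p Mn rho i a x : 0 <= Mn -> 0 <= rho ->
  (forall n, Rabs (p n) <= Mn * rho ^ n / (INR (fact n)) ^ 2) ->
  is_derive (fun s => PSeries (cf p (S i)) (s - a)) x (PSeries (cf p i) (x - a)).
Proof.
  intros HM Hr Hp.
  assert (H1 := is_derive_PSeries (cf p (S i)) (x - a) (cf_rad p Mn rho (S i) (x - a) HM Hr Hp)).
  rewrite (PSeries_ext _ (cf p i)) in H1 by apply cf_derive.
  assert (H2 : is_derive (fun s : R => s - a) x 1).
  { auto_derive; auto. }
  pose proof (is_derive_comp (PSeries (cf p (S i))) (fun s => s - a) x _ _ H1 H2) as H3.
  simpl in H3. unfold scal in H3; simpl in H3; unfold mult in H3; simpl in H3.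
  rewrite Rmult_1_l in H3. exact H3.
Qed.

Lemma PS_cont p Mn rho i a x : 0 <= Mn -> 0 <= rho ->
  (forall n, Rabs (p n) <= Mn * rho ^ n / (INR (fact n)) ^ 2) ->
  continuous (fun s => PSeries (cf p i) (s - a)) x.
Proof.
  intros HM Hr Hp. apply (ex_derive_continuous (K := R_AbsRing) (V := R_NormedModule)).
  assert (H1 := ex_derive_PSeries (cf p i) (x - a) (cf_rad p Mn rho i (x - a) HM Hr Hp)).
  apply (ex_derive_comp (PSeries (cf p i)) (fun s => s - a) x H1).
  auto_derive; auto.
Qed.

Lemma PS_RInt p Mn rho i a x : 0 <= Mn -> 0 <= rho ->
  (forall n, Rabs (p n) <= Mn * rho ^ n / (INR (fact n)) ^ 2) ->
  is_RInt (fun s => PSeries (cf p i) (s - a)) a x (PSeries (cf p (S i)) (x - a)).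
Proof.
  intros HM Hr Hp.
  replace (PSeries (cf p (S i)) (x - a)) with
    (minus (PSeries (cf p (S i)) (x - a)) (PSeries (cf p (S i)) (a - a))).
  2: { rewrite Rminus_diag, PSeries_0, cf_S0. unfold minus, plus, opp; simpl. ring. }
  apply (is_RInt_derive (V := R_CompleteNormedModule) (fun s => PSeries (cf p (S i)) (s - a))).
  - intros y _. apply (PS_is_derive p Mn rho); auto.
  - intros y _. apply (PS_cont p Mn rho); auto.
Qed.

Lemma pw_RInt i c t : is_RInt (fun w => pw (w - c) i) c t (pw (t - c) (S i)).
Proof.
  replace (pw (t - c) (S i)) with (minus (pw (t - c) (S i)) (pw (c - c) (S i))).
  2: { unfold pw. rewrite Rminus_diag. simpl. unfold minus, plus, opp; simpl. unfold Rdiv. ring. }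
  apply (is_RInt_derive (V := R_CompleteNormedModule) (fun w => pw (w - c) (S i))).
  - intros y _. unfold pw. auto_derive; auto. change (fact i + i * fact i)%nat with (fact (S i)). change (match i with 0%nat => 1 | S _ => INR i + 1 end) with (INR (S i)). rewrite fact_simpl, mult_INR, S_INR.
    pose proof (fact_pos i). pose proof (pos_INR i). unfold Rminus. field. lra.
  - intros y _. apply (ex_derive_continuous (K := R_AbsRing) (V := R_NormedModule)). unfold pw. auto_derive. pose proof (fact_pos i). lra.
Qed.

Lemma is_RInt_plusR (f g : R -> R) a b If Ig : is_RInt f a b If -> is_RInt g a b Ig ->
  is_RInt (fun y => f y + g y) a b (If + Ig).
Proof. intros; apply (is_RInt_plus (V := R_NormedModule)); auto. Qed.
Lemma is_RInt_minusR (f g : R -> R) a b If Ig : is_RInt f a b If -> is_RInt g a b Ig ->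
  is_RInt (fun y => f y - g y) a b (If - Ig).
Proof. intros; apply (is_RInt_minus (V := R_NormedModule)); auto. Qed.
Lemma is_RInt_scalR (f : R -> R) a b k If : is_RInt f a b If ->
  is_RInt (fun y => k * f y) a b (k * If).
Proof. intros; apply (is_RInt_scal (V := R_NormedModule)); auto. Qed.
Lemma is_RInt_scalR' (f : R -> R) a b k If : is_RInt f a b If ->
  is_RInt (fun y => f y * k) a b (If * k).
Proof.
  intros H. apply (is_RInt_ext (V := R_NormedModule) (fun y => k * f y)).
  intros; simpl; ring. rewrite Rmult_comm. apply is_RInt_scalR; auto.
Qed.
Lemma is_RInt_eqv (f : R -> R) a b l l' : is_RInt f a b l -> l = l' -> is_RInt f a b l'.
Proof. intros H ->; auto. Qed.
Lemma is_RInt_extR (f g : R -> R) a b l : (forall x, f x = g x) -> is_RInt f a b l -> is_RInt g a b l.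
Proof. intros E H. apply (is_RInt_ext (V := R_NormedModule) f); auto. Qed.
Lemma RInt_uniqR (f : R -> R) a b l : is_RInt f a b l -> RInt f a b = l.
Proof. intros H. apply (is_RInt_unique (V := R_CompleteNormedModule)); auto. Qed.
Lemma ex_of_is (f : R -> R) a b l : is_RInt f a b l -> ex_RInt f a b.
Proof. intros H; exists l; auto. Qed.

Definition H (p q : nat -> R) (a c : R) (i : nat) (s t : R) : R :=
  PSeries (cf p i) (s - a) * pw (t - c) i + pw (s - a) i * PSeries (cf q i) (t - c)
  - p 0%nat * pw (s - a) i * pw (t - c) i.

Definition Vop (f : R -> R -> R) (a c s t : R) := RInt (fun r => RInt (fun w => f r w) c t) a s.

Definition Hin (p q : nat -> R) (a c : R) (i : nat) (r t : R) : R :=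
  PSeries (cf p i) (r - a) * pw (t - c) (S i) + pw (r - a) i * PSeries (cf q (S i)) (t - c)
  - p 0%nat * pw (r - a) i * pw (t - c) (S i).

Lemma H_inner p q Mn rho a c i r t : 0 <= Mn -> 0 <= rho ->
  (forall n, Rabs (p n) <= Mn * rho ^ n / (INR (fact n)) ^ 2) ->
  (forall n, Rabs (q n) <= Mn * rho ^ n / (INR (fact n)) ^ 2) ->
  is_RInt (fun w => H p q a c i r w) c t (Hin p q a c i r t).
Proof.
  intros HM Hr Hp Hq. unfold H, Hin.
  apply is_RInt_minusR. apply is_RInt_plusR.
  - apply is_RInt_scalR. apply pw_RInt.
  - apply is_RInt_scalR. apply (PS_RInt q Mn rho); auto.
  - apply is_RInt_scalR. apply pw_RInt.
Qed.

Lemma H_outer p q Mn rho a c i s t : 0 <= Mn -> 0 <= rho ->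
  (forall n, Rabs (p n) <= Mn * rho ^ n / (INR (fact n)) ^ 2) ->
  (forall n, Rabs (q n) <= Mn * rho ^ n / (INR (fact n)) ^ 2) ->
  is_RInt (fun r => Hin p q a c i r t) a s (H p q a c (S i) s t).
Proof.
  intros HM Hr Hp Hq. unfold H, Hin.
  apply is_RInt_minusR. apply is_RInt_plusR.
  - apply is_RInt_scalR'. apply (PS_RInt p Mn rho); auto.
  - apply is_RInt_scalR'. replace (fun y => pw (y - a) i) with (fun y => pw (y - a) i) by reflexivity.
    apply pw_RInt.
  - apply is_RInt_scalR'. apply is_RInt_scalR. apply pw_RInt.
Qed.

Definition IntOK (f : R -> R -> R) a b c d :=
  (forall r t, a <= r <= b -> c <= t <= d -> ex_RInt (fun w => f r w) c t) /\
  (forall s t, a <= s <= b -> c <= t <= d -> ex_RInt (fun r => RInt (fun w => f r w) c t) a s).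

Lemma V_H p q Mn rho a c i s t : 0 <= Mn -> 0 <= rho ->
  (forall n, Rabs (p n) <= Mn * rho ^ n / (INR (fact n)) ^ 2) ->
  (forall n, Rabs (q n) <= Mn * rho ^ n / (INR (fact n)) ^ 2) ->
  Vop (H p q a c i) a c s t = H p q a c (S i) s t.
Proof.
  intros HM Hr Hp Hq. unfold Vop.
  rewrite (RInt_ext _ (fun r => Hin p q a c i r t)).
  apply RInt_uniqR. apply (H_outer p q Mn rho); auto.
  intros r _. apply RInt_uniqR. apply (H_inner p q Mn rho); auto.
Qed.

Lemma H_IntOK p q Mn rho a b c d i : 0 <= Mn -> 0 <= rho ->
  (forall n, Rabs (p n) <= Mn * rho ^ n / (INR (fact n)) ^ 2) ->
  (forall n, Rabs (q n) <= Mn * rho ^ n / (INR (fact n)) ^ 2) ->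
  IntOK (H p q a c i) a b c d.
Proof.
  intros HM Hr Hp Hq. split.
  - intros r t _ _. eapply ex_of_is. apply (H_inner p q Mn rho); auto.
  - intros s t _ _. apply (ex_RInt_ext (V := R_NormedModule)) with (fun r => Hin p q a c i r t).
    intros r _. symmetry. apply RInt_uniqR. apply (H_inner p q Mn rho); auto.
    eapply ex_of_is. apply (H_outer p q Mn rho); auto.
Qed.

Lemma IntOK_comb f g l a b c d : a <= b -> c <= d -> IntOK f a b c d -> IntOK g a b c d ->
  IntOK (fun s t => f s t - l * g s t) a b c d /\
  (forall s t, a <= s <= b -> c <= t <= d ->
     Vop (fun s t => f s t - l * g s t) a c s t = Vop f a c s t - l * Vop g a c s t).
Proof.
  intros Hab Hcd [F1 F2] [G1 G2].
  assert (E : forall s t, a <= s <= b -> c <= t <= d -> forall r, Rmin a s < r < Rmax a s ->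
     RInt (fun w => f r w - l * g r w) c t = RInt (fun w => f r w) c t - l * RInt (fun w => g r w) c t).
  { intros s t Hs Ht r Hr. rewrite Rmin_left in Hr by lra. rewrite Rmax_right in Hr by lra.
    rewrite RInt_minusR. rewrite RInt_scalR. auto.
    apply G1; auto; lra. apply F1; auto; lra. apply ex_RInt_scalR. apply G1; auto; lra. }
  split; [split|].
  - intros r t Hr Ht. apply ex_RInt_minusR. apply F1; auto. apply ex_RInt_scalR, G1; auto.
  - intros s t Hs Ht.
    apply (ex_RInt_ext (V := R_NormedModule)) with
      (fun r => RInt (fun w => f r w) c t - l * RInt (fun w => g r w) c t).
    intros r Hr. symmetry. apply (E s t); auto.
    apply ex_RInt_minusR. apply F2; auto. apply ex_RInt_scalR, G2; auto.
  - intros s t Hs Ht. unfold Vop.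
    rewrite (RInt_ext _ (fun r => RInt (fun w => f r w) c t - l * RInt (fun w => g r w) c t)).
    rewrite RInt_minusR. rewrite RInt_scalR. auto.
    apply G2; auto. apply F2; auto. apply ex_RInt_scalR, G2; auto.
    apply (E s t); auto.
Qed.

Lemma RInt_abs_le_fun (g h : R -> R) c t : c <= t -> ex_RInt g c t -> ex_RInt h c t ->
  (forall w, c < w < t -> Rabs (g w) <= h w) -> Rabs (RInt g c t) <= RInt h c t.
Proof.
  intros Hct Hg Hh Hb.
  assert (L1 : RInt g c t <= RInt h c t).
  { apply RInt_le; auto. intros x Hx. specialize (Hb x Hx). apply Rabs_le_between in Hb. lra. }
  assert (L2 : RInt (fun x => -1 * h x) c t <= RInt g c t).
  { apply RInt_le; auto. apply ex_RInt_scalR; auto. intros x Hx. specialize (Hb x Hx).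
    apply Rabs_le_between in Hb. lra. }
  rewrite RInt_scalR in L2 by auto. apply Rabs_le. lra.
Qed.

Fixpoint Rm (k : R -> R -> R) p q a c C (m : nat) : R -> R -> R :=
  match m with
  | O => k
  | S m' => fun s t => Rm k p q a c C m' s t - C ^ m' * H p q a c m' s t
  end.

Lemma k_decomp k p q a c C M s t :
  k s t = sum_n (fun i => C ^ i * H p q a c i s t) M + Rm k p q a c C (S M) s t.
Proof.
  induction M as [|M IH].
  - rewrite sum_O. simpl. ring.
  - rewrite sum_Sn. unfold plus; simpl. simpl in IH. rewrite IH at 1. ring.
Qed.

Lemma pw0 x : pw x 0 = 1.
Proof. unfold pw. simpl. field. Qed.

Lemma pw_nonneg x i : 0 <= x -> 0 <= pw x i.
Proof. intros. unfold pw. apply Rdiv_le_0_compat. apply pow_le; auto. apply fact_pos. Qed.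


Lemma Rm_all k p q Mn rho a b c d C :
  a <= b -> c <= d -> 0 <= Mn -> 0 <= rho ->
  (forall n, Rabs (p n) <= Mn * rho ^ n / (INR (fact n)) ^ 2) ->
  (forall n, Rabs (q n) <= Mn * rho ^ n / (INR (fact n)) ^ 2) ->
  p 0%nat = q 0%nat ->
  goursat_solution k a b c d C ->
  (forall s, a <= s <= b -> k s c = Series (fun n => p n * (s - a) ^ n)) ->
  (forall t, c <= t <= d -> k a t = Series (fun n => q n * (t - c) ^ n)) ->
  forall m, IntOK (Rm k p q a c C m) a b c d /\
    (forall s t, a <= s <= b -> c <= t <= d ->
       Rm k p q a c C (S m) s t = C * Vop (Rm k p q a c C m) a c s t).
Proof.
  intros Hab Hcd HM Hr Hp Hq H00 [Hk Hg] Hkp Hkq.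
  assert (HkI : IntOK k a b c d).
  { split. intros; apply (k_int1 k a b c d); auto. intros; apply (k_int2 k a b c d); auto. }
  induction m as [|m [IH1 IH2]].
  - split. exact HkI.
    intros s t Hs Ht. simpl. unfold H. rewrite !pw0.
    rewrite (PSeries_ext (cf p 0) p) by apply cf_0.
    rewrite (PSeries_ext (cf q 0) q) by apply cf_0.
    assert (E1 : PSeries p (s - a) = k s c) by (rewrite Hkp; auto).
    assert (E2 : PSeries q (t - c) = k a t) by (rewrite Hkq; auto).
    assert (E3 : p 0%nat = k a c).
    { rewrite Hkp by lra. rewrite Rminus_diag. symmetry. apply PSeries_0. }
    rewrite E1, E2, E3. rewrite (Hg s t Hs Ht). unfold Vop. ring.
  - assert (HC := IntOK_comb (Rm k p q a c C m) (H p q a c m) (C ^ m) a b c d Hab Hcd IH1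
       (H_IntOK p q Mn rho a b c d m HM Hr Hp Hq)).
    destruct HC as [HC1 HC2]. split. exact HC1.
    intros s t Hs Ht.
    change (Rm k p q a c C (S (S m)) s t) with
      (Rm k p q a c C (S m) s t - C ^ (S m) * H p q a c (S m) s t).
    rewrite (IH2 s t Hs Ht).
    change (Rm k p q a c C (S m)) with
      (fun s t => Rm k p q a c C m s t - C ^ m * H p q a c m s t).
    rewrite HC2 by auto.
    rewrite <- (V_H p q Mn rho a c m s t) by auto. simpl. ring.
Qed.

Lemma Rm_bound k p q Mn rho a b c d C B :
  a <= b -> c <= d -> 0 <= Mn -> 0 <= rho ->
  (forall n, Rabs (p n) <= Mn * rho ^ n / (INR (fact n)) ^ 2) ->
  (forall n, Rabs (q n) <= Mn * rho ^ n / (INR (fact n)) ^ 2) ->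
  p 0%nat = q 0%nat ->
  goursat_solution k a b c d C ->
  (forall s, a <= s <= b -> k s c = Series (fun n => p n * (s - a) ^ n)) ->
  (forall t, c <= t <= d -> k a t = Series (fun n => q n * (t - c) ^ n)) ->
  (forall x y, inRect a b c d x y -> Rabs (k x y) <= B) ->
  forall m s t, a <= s <= b -> c <= t <= d ->
    Rabs (Rm k p q a c C m s t) <= B * Rabs C ^ m * pw (s - a) m * pw (t - c) m.
Proof.
  intros Hab Hcd HM Hr Hp Hq H00 Hk Hkp Hkq HB.
  pose proof (Rm_all k p q Mn rho a b c d C Hab Hcd HM Hr Hp Hq H00 Hk Hkp Hkq) as HA.
  induction m as [|m IH]; intros s t Hs Ht.
  - simpl. rewrite !pw0. rewrite !Rmult_1_r. apply HB. split; auto.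
  - destruct (HA m) as [[I1 I2] Hrec].
    rewrite (Hrec s t Hs Ht). rewrite Rabs_mult.
    set (K := B * Rabs C ^ m).
    assert (Hin : forall r, a <= r <= s ->
      Rabs (RInt (fun w => Rm k p q a c C m r w) c t) <= K * pw (r - a) m * pw (t - c) (S m)).
    { intros r Hr'.
      eapply Rle_trans. apply RInt_abs_le_fun with (h := fun w => K * pw (r - a) m * pw (w - c) m).
      lra. apply I1; lra. eapply ex_of_is. apply is_RInt_scalR. apply pw_RInt.
      intros w Hw. apply IH; lra.
      right. apply RInt_uniqR. apply is_RInt_scalR. apply pw_RInt. }
    unfold Vop.
    assert (Hout : Rabs (RInt (fun r => RInt (fun w => Rm k p q a c C m r w) c t) a s)
              <= K * pw (s - a) (S m) * pw (t - c) (S m)).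
    { eapply Rle_trans. apply RInt_abs_le_fun with (h := fun r => K * pw (r - a) m * pw (t - c) (S m)).
      lra. apply I2; lra. eapply ex_of_is. apply is_RInt_scalR'. apply is_RInt_scalR. apply pw_RInt.
      intros r Hr'. apply Hin; lra.
      right. apply RInt_uniqR. apply is_RInt_scalR'. apply is_RInt_scalR. apply pw_RInt. }
    eapply Rle_trans. apply Rmult_le_compat_l. apply Rabs_pos. exact Hout.
    unfold K. simpl. right. ring.
Qed.

Lemma sum_rev (f : nat -> R) n : sum_f_R0 (fun j => f (n - j)%nat) n = sum_f_R0 f n.
Proof.
  induction n as [|n IH].
  - reflexivity.
  - rewrite decomp_sum by lia. simpl Init.Nat.pred. rewrite tech5.
    rewrite Nat.sub_0_r. rewrite <- IH.
    replace (sum_f_R0 (fun i => f (S n - S i)%nat) n) with (sum_f_R0 (fun j => f (n - j)%nat) n).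
    ring. apply sum_eq. intros. f_equal.
Qed.

Lemma sum_swap (f : nat -> nat -> R) M N :
  sum_f_R0 (fun i => sum_f_R0 (fun n => f i n) N) M =
  sum_f_R0 (fun n => sum_f_R0 (fun i => f i n) M) N.
Proof.
  induction M as [|M IH].
  - reflexivity.
  - rewrite tech5, IH. rewrite <- plus_sum. apply sum_eq. intros. rewrite tech5. reflexivity.
Qed.

Lemma sum_zero_tail (f : nat -> R) N M : (N <= M)%nat -> (forall i, (N < i)%nat -> f i = 0) ->
  sum_f_R0 f M = sum_f_R0 f N.
Proof.
  intros H Hz. induction H as [|M H IH].
  - reflexivity.
  - rewrite tech5, IH, Hz by lia. ring.
Qed.

Lemma sum_prefix (u : nat -> R) i K : (forall m, (m < i)%nat -> u m = 0) ->
  sum_f_R0 u (i + K) = sum_f_R0 (fun j => u (i + j)%nat) K.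
Proof.
  intros Hz. induction K as [|K IH].
  - simpl. rewrite Nat.add_0_r. destruct i as [|i]. reflexivity.
    rewrite tech5. rewrite sum_eq_R0. ring. intros; apply Hz; lia.
  - rewrite Nat.add_succ_r, tech5, IH, tech5. f_equal. f_equal. lia.
Qed.

Lemma sum_nonneg_mono (w : nat -> R) N K : (forall n, 0 <= w n) -> (N <= K)%nat ->
  sum_f_R0 w N <= sum_f_R0 w K.
Proof.
  intros Hw H. induction H as [|K H IH]. lra. rewrite tech5. specialize (Hw (S K)). lra.
Qed.

Lemma ser_tail (u w : nat -> R) N K : (forall n, Rabs (u n) <= w n) -> ex_series w -> (N <= K)%nat ->
  Rabs (Series u - sum_f_R0 u K) <= Series w - sum_f_R0 w N.
Proof.
  intros Huw Hw HNK.
  assert (Hw0 : forall n, 0 <= w n) by (intros n; eapply Rle_trans; [apply Rabs_pos|apply Huw]).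
  assert (Hu : ex_series u) by (apply exser_le with w; auto).
  rewrite (Series_incr_n u (S K)) by (auto; lia).
  rewrite (Series_incr_n w (S K)) by (auto; lia). simpl Init.Nat.pred.
  replace (sum_f_R0 u K + Series (fun k => u (S K + k)%nat) - sum_f_R0 u K)
    with (Series (fun k => u (S K + k)%nat)) by ring.
  assert (HwK : ex_series (fun k => w (S K + k)%nat)) by (apply (ex_series_incr_n (V := R_NormedModule) w (S K)); auto).
  assert (L1 : Rabs (Series (fun k => u (S K + k)%nat)) <= Series (fun k => w (S K + k)%nat)).
  { eapply Rle_trans. apply Series_Rabs.
    apply exser_le with (fun k => w (S K + k)%nat); auto. intros; rewrite Rabs_Rabsolu; auto.
    apply Series_le; auto. intros n; split. apply Rabs_pos. apply Huw. }
  pose proof (sum_nonneg_mono w N K Hw0 HNK). lra.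
Qed.

Lemma Series_sum (f : nat -> nat -> R) M : (forall i, ex_series (f i)) ->
  Series (fun n => sum_f_R0 (fun i => f i n) M) = sum_f_R0 (fun i => Series (f i)) M /\
  ex_series (fun n => sum_f_R0 (fun i => f i n) M).
Proof.
  intros Hf. induction M as [|M [IH1 IH2]].
  - simpl. split; auto.
  - simpl. rewrite Series_plus; auto. rewrite IH1. split; auto.
    apply (ex_series_plus (V := R_NormedModule)); auto.
Qed.

Definition om (g L : R) (i n : nat) : R :=
  if (i <=? n)%nat then g ^ (n - i) * L ^ n / (INR (fact i) * INR (fact (n - i)) * INR (fact n)) else 0.
Definition th (g L : R) (n : nat) : R := ((g + 1) * L) ^ n / (INR (fact n)) ^ 2.

Lemma om_nonneg g L i n : 0 <= g -> 0 <= L -> 0 <= om g L i n.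
Proof.
  intros Hg HL. unfold om. destruct (i <=? n)%nat; [|lra].
  pose proof (fact_pos i). pose proof (fact_pos (n - i)). pose proof (fact_pos n).
  apply Rdiv_le_0_compat. apply Rmult_le_pos; apply pow_le; auto.
  apply Rmult_lt_0_compat; [apply Rmult_lt_0_compat|]; auto.
Qed.

Lemma om_sum g L n : sum_f_R0 (fun i => om g L i n) n = th g L n.
Proof.
  unfold th. rewrite Rpow_mult_distr. replace (g + 1) with (1 + g) by ring. rewrite binomial.
  transitivity (sum_f_R0 (fun i => Binomial.C n i * 1 ^ i * g ^ (n - i) * (L ^ n / INR (fact n) ^ 2)) n).
  2: { rewrite <- scal_sum. unfold Rdiv. ring. }
  apply sum_eq. intros i Hi. unfold om. destruct (Nat.leb_spec i n); [|lia].
  unfold Binomial.C. rewrite pow1.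
  pose proof (fact_pos i). pose proof (fact_pos (n - i)). pose proof (fact_pos n).
  field. repeat split; lra.
Qed.

Lemma om_le_th g L M n : 0 <= g -> 0 <= L -> sum_f_R0 (fun i => om g L i n) M <= th g L n.
Proof.
  intros Hg HL. rewrite <- om_sum.
  destruct (Nat.le_gt_cases M n).
  - apply sum_nonneg_mono; auto. intros; apply om_nonneg; auto.
  - right. apply sum_zero_tail. lia. intros i Hi. unfold om.
    destruct (Nat.leb_spec i n); [lia|auto].
Qed.

Lemma th_nonneg g L n : 0 <= g -> 0 <= L -> 0 <= th g L n.
Proof.
  intros. unfold th. apply Rdiv_le_0_compat. apply pow_le. nra.
  pose proof (fact_pos n). nra.
Qed.

Lemma ex_th g L : 0 <= g -> 0 <= L -> ex_series (th g L).
Proof.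
  intros Hg HL. apply exser_le with (fun n => ((g + 1) * L) ^ n / INR (fact n)).
  2: apply exp_ser.
  intros n. rewrite Rabs_pos_eq by (apply th_nonneg; auto). unfold th.
  pose proof (fact_pos n). pose proof (fact_ge1 n).
  unfold Rdiv. apply Rmult_le_compat_l. apply pow_le; nra.
  apply Rinv_le_contravar. auto. nra.
Qed.

Lemma ex_om g L i : 0 <= g -> 0 <= L -> ex_series (om g L i).
Proof.
  intros Hg HL. apply exser_le with (th g L). 2: apply ex_th; auto.
  intros n. rewrite Rabs_pos_eq by (apply om_nonneg; auto).
  eapply Rle_trans. 2: apply (om_le_th g L i n); auto.
  destruct i. simpl. lra. rewrite tech5.
  assert (0 <= sum_f_R0 (fun i0 => om g L i0 n) i) by (apply cond_pos_sum; intros; apply om_nonneg; auto).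
  lra.
Qed.

Definition up (C : R) (P : nat -> R) (U W : R) (i n : nat) : R := C ^ i * pw U i * cf P i n * W ^ n.

Lemma up_zero C P U W i n : (n < i)%nat -> up C P U W i n = 0.
Proof. intros H. unfold up, cf. destruct (Nat.leb_spec i n); [lia|ring]. Qed.

Lemma up_bound C P U W Mn g Dl i n : 0 <= Mn -> 0 <= g -> 0 <= U <= Dl -> 0 <= W <= Dl ->
  (forall n, Rabs (P n) <= Mn * (g * Rabs C * Dl) ^ n / (INR (fact n)) ^ 2) ->
  Rabs (up C P U W i n) <= Mn * om g (Rabs C * Dl ^ 2) i n.
Proof.
  intros HM Hg HU HW HP. unfold up, om, cf.
  destruct (Nat.leb_spec i n) as [Hin|Hin].
  2: { rewrite Rmult_0_r, Rmult_0_l, Rabs_R0, Rmult_0_r. lra. }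
  destruct (Nat.le_exists_sub i n Hin) as [j [Hj _]]. subst n.
  replace (j + i - i)%nat with j by lia. rewrite (Nat.add_comm j i).
  specialize (HP j).
  pose proof (fact_pos i) as F1. pose proof (fact_pos j) as F2. pose proof (fact_pos (i + j)) as F3.
  set (A := Rabs (P j)). set (F := INR (fact j)).
  assert (HA : A * F <= Mn * (g * Rabs C * Dl) ^ j / F).
  { apply Rmult_le_compat_r with (r := F) in HP; [|unfold F; lra].
    eapply Rle_trans. exact HP. right. unfold F. field. lra. }
  assert (HC0 := Rabs_pos C).
  assert (E1 : Rabs (C ^ i * pw U i * (P j * F / INR (fact (i + j))) * W ^ (i + j)) =
     (Rabs C ^ i / (INR (fact i) * INR (fact (i + j)))) * (U ^ i * W ^ (i + j)) * (A * F)).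
  { unfold pw. rewrite !Rabs_mult. rewrite RPow_abs.
    rewrite (Rabs_pos_eq (U ^ i / _)) by (apply Rdiv_le_0_compat; [apply pow_le|]; lra).
    rewrite (Rabs_pos_eq (W ^ (i + j))) by (apply pow_le; lra).
    unfold Rdiv. rewrite !Rabs_mult. rewrite (Rabs_pos_eq F) by (unfold F; lra).
    rewrite (Rabs_pos_eq (/ INR (fact (i + j)))) by (apply Rlt_le, Rinv_0_lt_compat; lra).
    unfold A. field. lra. }
  rewrite E1.
  assert (E2 : Mn * (g ^ j * (Rabs C * Dl ^ 2) ^ (i + j) /
                (INR (fact i) * F * INR (fact (i + j)))) =
     (Rabs C ^ i / (INR (fact i) * INR (fact (i + j)))) * (Dl ^ i * Dl ^ (i + j)) *
       (Mn * (g * Rabs C * Dl) ^ j / F)).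
  { rewrite !Rpow_mult_distr. rewrite !pow_add.
    replace ((Dl ^ 2) ^ i) with (Dl ^ i * Dl ^ i) by (rewrite <- Rpow_mult_distr; f_equal; ring).
    replace ((Dl ^ 2) ^ j) with (Dl ^ j * Dl ^ j) by (rewrite <- Rpow_mult_distr; f_equal; ring).
    field. unfold F; lra. }
  rewrite E2.
  apply Rmult_le_compat.
  - apply Rmult_le_pos. apply Rdiv_le_0_compat. apply pow_le; lra. nra.
    apply Rmult_le_pos; apply pow_le; lra.
  - apply Rmult_le_pos. apply Rabs_pos. unfold F; lra.
  - apply Rmult_le_compat_l. apply Rdiv_le_0_compat. apply pow_le; lra. nra.
    apply Rmult_le_compat; try (apply pow_le; lra); apply pow_incr; lra.
  - exact HA.
Qed.

Definition Hv (p q : nat -> R) (X Y : R) (i : nat) : R :=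
  PSeries (cf p i) X * pw Y i + pw X i * PSeries (cf q i) Y - p 0%nat * pw X i * pw Y i.

Definition phat (N : nat) (C : R) (p q : nat -> R) (X Y : R) (n : nat) : R :=
  sum_n (fun j => p j * (C * Y) ^ (n - j) * INR (fact j)
                   / (INR (fact (n - j)) * INR (fact n))) n
  + sum_n_m (fun j => q j * C ^ n * Y ^ (n + j) * INR (fact j)
                   / (INR (fact (n + j)) * INR (fact n))) 1 N.

Lemma Hv_series C p q X Y Mn g Dl i : 0 <= Mn -> 0 <= g -> 0 <= X <= Dl -> 0 <= Y <= Dl ->
  (forall n, Rabs (p n) <= Mn * (g * Rabs C * Dl) ^ n / (INR (fact n)) ^ 2) ->
  (forall n, Rabs (q n) <= Mn * (g * Rabs C * Dl) ^ n / (INR (fact n)) ^ 2) ->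
  p 0%nat = q 0%nat ->
  C ^ i * Hv p q X Y i = Series (up C p Y X i) + Series (up C q X Y i) - up C q X Y i i.
Proof.
  intros HM Hg HX HY Hp Hq H00. unfold Hv, PSeries.
  rewrite Rmult_minus_distr_l, Rmult_plus_distr_l.
  assert (E1 : C ^ i * (Series (fun k => cf p i k * X ^ k) * pw Y i) = Series (up C p Y X i)).
  { replace (C ^ i * (Series (fun k => cf p i k * X ^ k) * pw Y i)) with
      ((C ^ i * pw Y i) * Series (fun k => cf p i k * X ^ k)) by ring.
    rewrite <- Series_scal_l. apply Series_ext. intros n.
    unfold up. ring. }
  assert (E2 : C ^ i * (pw X i * Series (fun k => cf q i k * Y ^ k)) = Series (up C q X Y i)).
  { rewrite <- Rmult_assoc, <- Series_scal_l. apply Series_ext. intros n. unfold up. ring. }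
  assert (E3 : C ^ i * (p 0%nat * pw X i * pw Y i) = up C q X Y i i).
  { unfold up, cf, pw. rewrite Nat.leb_refl, Nat.sub_diag. simpl fact. rewrite H00.
    pose proof (fact_pos i). simpl INR. field. lra. }
  rewrite E1, E2, E3. ring.
Qed.

Lemma snm1 (f : nat -> R) N : sum_n_m f 1 N = sum_f_R0 f N - f 0%nat.
Proof.
  rewrite <- sum_n_Reals. unfold sum_n. rewrite (sum_n_m_Chasles f 0 0 N) by lia.
  rewrite sum_n_n. assert (Hz : forall z : R, z = f 0%nat + z - f 0%nat) by (intros; ring). apply Hz.
Qed.

Lemma phat_terms C p q X Y N n :
  phat N C p q X Y n * X ^ n =
  sum_f_R0 (fun i => up C p Y X i n) n
  + (sum_f_R0 (fun j => up C q X Y n (n + j)%nat) N - up C q X Y n n).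
Proof.
  unfold phat. rewrite Rmult_plus_distr_r. f_equal.
  - rewrite sum_n_Reals. rewrite Rmult_comm, scal_sum. rewrite <- sum_rev. apply sum_eq.
    intros j Hj. unfold up, cf, pw. destruct (Nat.leb_spec j n); [|lia].
    replace (n - (n - j))%nat with j by lia.
    pose proof (fact_pos j). pose proof (fact_pos (n - j)). pose proof (fact_pos n).
    rewrite Rpow_mult_distr. field. lra.
  - rewrite snm1. rewrite Rmult_minus_distr_r. rewrite Rmult_comm, scal_sum.
      rewrite Nat.add_0_r. f_equal.
      * apply sum_eq. intros j Hj. unfold up, cf, pw.
        destruct (Nat.leb_spec n (n + j)); [|lia]. replace (n + j - n)%nat with j by lia.
        pose proof (fact_pos j). pose proof (fact_pos (n + j)). pose proof (fact_pos n).
        field. lra.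
      * unfold up, cf, pw. rewrite Nat.leb_refl, Nat.sub_diag. simpl fact. rewrite ?Nat.add_0_r.
        pose proof (fact_pos n). simpl INR. field. lra.
Qed.

Lemma C_main C p q X Y Mn g Dl N M : 0 <= Mn -> 0 <= g -> 0 <= X <= Dl -> 0 <= Y <= Dl ->
  (forall n, Rabs (p n) <= Mn * (g * Rabs C * Dl) ^ n / (INR (fact n)) ^ 2) ->
  (forall n, Rabs (q n) <= Mn * (g * Rabs C * Dl) ^ n / (INR (fact n)) ^ 2) ->
  p 0%nat = q 0%nat -> (N <= M)%nat ->
  Rabs (sum_f_R0 (fun i => C ^ i * Hv p q X Y i) M
        - sum_f_R0 (fun n => phat N C p q X Y n * X ^ n) N)
  <= 2 * Mn * (Series (th g (Rabs C * Dl ^ 2)) - sum_f_R0 (th g (Rabs C * Dl ^ 2)) N).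
Proof.
  intros HM Hg HX HY Hp Hq H00 HNM.
  set (L := Rabs C * Dl ^ 2).
  assert (HL : 0 <= L) by (unfold L; apply Rmult_le_pos; [apply Rabs_pos|apply pow_le; lra]).
  set (K := fun i => if (i <=? N)%nat then (i + N)%nat else i).
  set (Dp := fun i => Series (up C p Y X i) - sum_f_R0 (up C p Y X i) N).
  set (Dq := fun i => Series (up C q X Y i) - sum_f_R0 (up C q X Y i) (K i)).
  assert (Edec : sum_f_R0 (fun i => C ^ i * Hv p q X Y i) M
        - sum_f_R0 (fun n => phat N C p q X Y n * X ^ n) N = sum_f_R0 (fun i => Dp i + Dq i) M).
  { rewrite (sum_eq (fun n => phat N C p q X Y n * X ^ n) (fun n => sum_f_R0 (fun i => up C p Y X i n) n
        + (sum_f_R0 (fun j => up C q X Y n (n + j)%nat) N - up C q X Y n n)))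
      by (intros; apply phat_terms).
    rewrite plus_sum.
    assert (E1 : sum_f_R0 (fun n => sum_f_R0 (fun i => up C p Y X i n) n) N =
                 sum_f_R0 (fun i => sum_f_R0 (fun n => up C p Y X i n) N) M).
    { rewrite sum_swap. apply sum_eq. intros n Hn. symmetry. apply sum_zero_tail. lia.
      intros i Hi. apply up_zero; lia. }
    assert (E2 : sum_f_R0 (fun n => sum_f_R0 (fun j => up C q X Y n (n + j)%nat) N - up C q X Y n n) N =
                 sum_f_R0 (fun i => sum_f_R0 (up C q X Y i) (K i) - up C q X Y i i) M).
    { rewrite (sum_zero_tail (fun i => sum_f_R0 (up C q X Y i) (K i) - up C q X Y i i) N M HNM).
      - apply sum_eq. intros i Hi. unfold K. destruct (Nat.leb_spec i N); [|lia].
        rewrite sum_prefix. reflexivity. intros; apply up_zero; lia.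
      - intros i Hi. unfold K. destruct (Nat.leb_spec i N); [lia|].
        replace i with (i + 0)%nat at 2 by lia. rewrite sum_prefix.
        simpl. rewrite Nat.add_0_r. ring. intros; apply up_zero; lia. }
    rewrite E1, E2.
    rewrite (sum_eq (fun i => C ^ i * Hv p q X Y i) (fun i => Series (up C p Y X i) + Series (up C q X Y i) - up C q X Y i i))
      by (intros; apply (Hv_series C p q X Y Mn g Dl); auto).
    rewrite <- plus_sum, <- minus_sum. apply sum_eq. intros i _. unfold Dp, Dq. replace (sum_f_R0 (fun n => up C p Y X i n) N) with (sum_f_R0 (up C p Y X i) N) by reflexivity. ring. }
  rewrite Edec.
  set (Om := fun n => sum_f_R0 (fun i => om g L i n) M).
  assert (Hex : forall i, ex_series (om g L i)) by (intros; apply ex_om; auto).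
  assert (HD : forall i, Rabs (Dp i + Dq i) <= 2 * Mn * (Series (om g L i) - sum_f_R0 (om g L i) N)).
  { intros i.
    assert (Hw : ex_series (fun n => Mn * om g L i n)) by
      (apply (ex_series_scal_l (V := R_NormedModule)); auto).
    assert (T1 : Rabs (Dp i) <= Series (fun n => Mn * om g L i n) - sum_f_R0 (fun n => Mn * om g L i n) N).
    { apply ser_tail; auto. intros n. apply (up_bound C p Y X Mn g Dl); auto. }
    assert (T2 : Rabs (Dq i) <= Series (fun n => Mn * om g L i n) - sum_f_R0 (fun n => Mn * om g L i n) N).
    { apply ser_tail; auto. intros n. apply (up_bound C q X Y Mn g Dl); auto.
      unfold K. destruct (Nat.leb_spec i N); lia. }
    rewrite Series_scal_l in T1, T2.
    rewrite (sum_eq (fun n => Mn * om g L i n) (fun n => om g L i n * Mn)) in T1, T2 by (intros; ring).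
    rewrite <- scal_sum in T1, T2.
    eapply Rle_trans. apply Rabs_triang. lra. }
  eapply Rle_trans. apply Rsum_abs.
  eapply Rle_trans. apply sum_Rle. intros i _. apply HD.
  rewrite (sum_eq _ (fun i => (Series (om g L i) - sum_f_R0 (om g L i) N) * (2 * Mn))) by (intros; ring).
  rewrite <- scal_sum. rewrite minus_sum.
  destruct (Series_sum (om g L) M Hex) as [S1 S2].
  rewrite <- S1. rewrite sum_swap. fold Om.
  assert (HOm : forall n, Rabs (Om n) <= th g L n).
  { intros n. unfold Om. rewrite Rabs_pos_eq. apply om_le_th; auto.
    apply cond_pos_sum. intros; apply om_nonneg; auto. }
  pose proof (ser_tail Om (th g L) N N HOm (ex_th g L Hg HL) (le_n N)) as T.
  replace (Series (fun n => sum_f_R0 (fun i => om g L i n) M)) with (Series Om) by reflexivity.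
  apply Rmult_le_compat_l. lra.
  eapply Rle_trans. apply Rle_abs. exact T.
Qed.

Lemma fact_mul a b : INR (fact a) * INR (fact b) <= INR (fact (a + b)).
Proof.
  induction b as [|b IH].
  - rewrite Nat.add_0_r. simpl. lra.
  - rewrite Nat.add_succ_r. rewrite !fact_simpl, !mult_INR.
    pose proof (fact_pos a). pose proof (fact_pos b).
    assert (INR (S b) <= INR (S (a + b))) by (apply le_INR; lia).
    pose proof (pos_INR (S b)).
    replace (INR (fact a) * (INR (S b) * INR (fact b))) with (INR (S b) * (INR (fact a) * INR (fact b))) by ring.
    apply Rmult_le_compat; auto. nra.
Qed.

Lemma ser_ge_first (u : nat -> R) : ex_series u -> (forall n, 0 <= u n) -> u 0%nat <= Series u.
Proof.
  intros Hu H0. rewrite (Series_incr_n u 1) by (auto; lia). simpl.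
  assert (0 <= Series (fun k => u (S k))).
  { replace 0 with (Series (fun k => 0 * u (S k))) by (rewrite Series_scal_l; ring).
    apply Series_le.
    intros n; split. rewrite Rmult_0_l; lra. rewrite Rmult_0_l; auto.
    apply (ex_series_incr_1 (V := R_NormedModule) u); auto. }
  lra.
Qed.

Lemma ex_I0ser z : 0 <= z -> ex_series (fun k => z ^ k / (INR (fact k)) ^ 2).
Proof.
  intros Hz. apply exser_le with (fun n => z ^ n / INR (fact n)). 2: apply exp_ser.
  intros n. pose proof (fact_pos n). pose proof (fact_ge1 n).
  rewrite Rabs_pos_eq by (apply Rdiv_le_0_compat; [apply pow_le|]; nra).
  unfold Rdiv. apply Rmult_le_compat_l. apply pow_le; auto.
  apply Rinv_le_contravar; nra.
Qed.

Lemma I0_eq u z : 0 <= u -> 0 <= z -> I0 (2 * sqrt u * z) = Series (fun k => (u * z ^ 2) ^ k / (INR (fact k)) ^ 2).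
Proof.
  intros Hu Hz. unfold I0. apply Series_ext. intros k. f_equal.
  rewrite pow_mult. f_equal.
  replace (2 * sqrt u * z / 2) with (sqrt u * z) by field.
  rewrite Rpow_mult_distr. simpl. rewrite Rmult_1_r. rewrite sqrt_sqrt by auto. ring.
Qed.

Lemma th_tail g L N : 0 <= g -> 0 <= L ->
  Series (th g L) - sum_f_R0 (th g L) N <=
  th g L (S N) * Series (fun k => ((g + 1) * L) ^ k / (INR (fact k)) ^ 2).
Proof.
  intros Hg HL. set (z := (g + 1) * L). assert (Hz : 0 <= z) by (unfold z; nra).
  rewrite (Series_incr_n (th g L) (S N)); [| lia | apply ex_th; auto]. simpl Init.Nat.pred.
  rewrite <- Series_scal_l.
  assert (Series (fun k => th g L (S N + k)) <= Series (fun k => th g L (S N) * (z ^ k / INR (fact k) ^ 2))).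
  { apply Series_le. 2: apply (ex_series_scal_l (V := R_NormedModule)); apply ex_I0ser; auto.
    intros k. split. apply th_nonneg; auto.
    unfold th. fold z. rewrite pow_add.
    pose proof (fact_mul (S N) k) as Fm. pose proof (fact_pos (S N)). pose proof (fact_pos k).
    pose proof (fact_pos (S N + k)).
    assert (Hzs : 0 <= z ^ S N) by (apply pow_le; auto).
    assert (Hzk : 0 <= z ^ k) by (apply pow_le; auto).
    replace (z ^ S N / INR (fact (S N)) ^ 2 * (z ^ k / INR (fact k) ^ 2)) with
      ((z ^ S N * z ^ k) / (INR (fact (S N)) * INR (fact k)) ^ 2) by (field; lra).
    unfold Rdiv. apply Rmult_le_compat_l. nra.
    apply Rinv_le_contravar. apply pow_lt; apply Rmult_lt_0_compat; lra. apply pow_incr. split; [apply Rmult_le_pos; lra | exact Fm]. }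
  lra.
Qed.

Theorem mainTheorem5 (a b c d C : R) (N gamma : nat) (p q : nat -> R)
  (k : R -> R -> R) :
  a < b -> c < d -> C <> 0 -> (2 <= N)%nat -> (1 <= gamma)%nat ->
  p 0%nat = q 0%nat ->
  is_finite (pq_norm_Rbar (INR gamma) C (Rmax (b - a) (d - c)) p q) ->
  goursat_solution k a b c d C ->
  (forall s, a <= s <= b -> k s c = Series (fun n => p n * (s - a) ^ n)) ->
  (forall t, c <= t <= d -> k a t = Series (fun n => q n * (t - c) ^ n)) ->
  let Delta := Rmax (b - a) (d - c) in
  Rabs (k b d - k_hat N a b c d C p q) <=
    2 * pq_norm (INR gamma) C Delta p q
      * I0 (2 * sqrt (INR gamma * Rabs C) * Delta)
      * I0 (2 * sqrt ((INR gamma + 1) * Rabs C) * Delta)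
      * ((Rabs C * Delta ^ 2) ^ (N + 1) * (INR gamma + 1) ^ (N + 1))
      / (INR (fact (N + 1))) ^ 2.
Proof.
  intros Hab Hcd HC HN Hgam H00 Hfin Hk Hkp Hkq Delta.
  assert (HXD : b - a <= Delta) by apply Rmax_l.
  assert (HYD : d - c <= Delta) by apply Rmax_r.
  assert (Hg1 : 1 <= INR gamma) by (replace 1 with (INR 1) by reflexivity; apply le_INR; auto).
  set (g := INR gamma) in *.
  set (Mn := pq_norm g C Delta p q).
  assert (HCp : 0 < Rabs C) by (apply Rabs_pos_lt; auto).
  assert (HDp : 0 < Delta) by lra.
  set (rho := g * Rabs C * Delta).
  assert (Hrho : 0 < rho) by (unfold rho; apply Rmult_lt_0_compat; [apply Rmult_lt_0_compat|]; lra).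
  assert (Hw : forall n, pq_weighted g C Delta p q n <= Mn).
  { intros n. unfold Mn, pq_norm.
    pose proof (Sup_seq_minor_le (fun n => Finite (pq_weighted g C Delta p q n)) (pq_weighted g C Delta p q n) n
      (Rbar_le_refl _)) as H1.
    change (Rmax (b - a) (d - c)) with Delta in Hfin.
    unfold pq_norm_Rbar in Hfin |- *. unfold is_finite in Hfin.
    rewrite <- Hfin in H1. simpl in H1. exact H1. }
  assert (Hconv : forall (r : nat -> R) n, Rabs (INR (fact n) ^ 2 * r n / (g * Rabs C * Delta) ^ n) <= Mn ->
            Rabs (r n) <= Mn * rho ^ n / (INR (fact n)) ^ 2).
  { intros r n H. fold rho in H. pose proof (fact_pos n) as F.
    assert (Hrn : 0 < rho ^ n) by (apply pow_lt; auto).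
    replace (Rabs (INR (fact n) ^ 2 * r n / rho ^ n)) with (Rabs (r n) * (INR (fact n) ^ 2 / rho ^ n)) in H.
    2: { unfold Rdiv. rewrite !Rabs_mult. rewrite (Rabs_pos_eq (INR (fact n) ^ 2)) by (apply pow_le; lra).
         rewrite (Rabs_pos_eq (/ rho ^ n)) by (apply Rlt_le, Rinv_0_lt_compat; auto). ring. }
    assert (Hpos : 0 < INR (fact n) ^ 2 / rho ^ n) by (apply Rdiv_lt_0_compat; auto; apply pow_lt; lra).
    apply Rmult_le_compat_r with (r := rho ^ n / INR (fact n) ^ 2) in H.
    2: { apply Rlt_le, Rdiv_lt_0_compat; auto. apply pow_lt; lra. }
    replace (Rabs (r n) * (INR (fact n) ^ 2 / rho ^ n) * (rho ^ n / INR (fact n) ^ 2)) with (Rabs (r n)) in H.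
    2: { field. split; lra. }
    replace (Mn * rho ^ n / INR (fact n) ^ 2) with (Mn * (rho ^ n / INR (fact n) ^ 2)) by (unfold Rdiv; ring).
    exact H. }
  assert (Hp : forall n, Rabs (p n) <= Mn * rho ^ n / (INR (fact n)) ^ 2).
  { intros n. apply Hconv. eapply Rle_trans. 2: apply (Hw n). apply Rmax_l. }
  assert (Hq : forall n, Rabs (q n) <= Mn * rho ^ n / (INR (fact n)) ^ 2).
  { intros n. apply Hconv. eapply Rle_trans. 2: apply (Hw n). apply Rmax_r. }
  assert (HM0 : 0 <= Mn).
  { eapply Rle_trans. 2: apply (Hw 0%nat). eapply Rle_trans. 2: apply Rmax_l. apply Rabs_pos. }
  assert (Hg0 : 0 <= g) by lra.
  destruct (k_bounded k a b c d) as [B [HB0 HB]]; try lra. apply Hk.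
  set (L := Rabs C * Delta ^ 2).
  assert (HL : 0 <= L) by (unfold L; apply Rmult_le_pos; [lra|apply pow_le; lra]).
  set (T := Series (th g L) - sum_f_R0 (th g L) N).
  assert (Ekh : k_hat N a b c d C p q = / 2 *
     (sum_f_R0 (fun n => phat N C p q (b - a) (d - c) n * (b - a) ^ n) N
      + sum_f_R0 (fun n => phat N C q p (d - c) (b - a) n * (d - c) ^ n) N)).
  { unfold k_hat. rewrite sum_n_Reals. rewrite plus_sum. reflexivity. }
  assert (Key : forall M, (N <= M)%nat ->
    Rabs (k b d - k_hat N a b c d C p q) <=
      B * Rabs C ^ (S M) * pw (b - a) (S M) * pw (d - c) (S M) + 2 * Mn * T).
  { intros M HNM.
    rewrite (k_decomp k p q a c C M b d). rewrite sum_n_Reals.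
    change (sum_f_R0 (fun i => C ^ i * H p q a c i b d) M) with
      (sum_f_R0 (fun i => C ^ i * Hv p q (b - a) (d - c) i) M).
    pose proof (C_main C p q (b - a) (d - c) Mn g Delta N M HM0 Hg0 ltac:(lra) ltac:(lra) Hp Hq H00 HNM) as T1.
    pose proof (C_main C q p (d - c) (b - a) Mn g Delta N M HM0 Hg0 ltac:(lra) ltac:(lra) Hq Hp (eq_sym H00) HNM) as T2.
    fold L in T1, T2. fold T in T1, T2.
    rewrite (sum_eq (fun i => C ^ i * Hv q p (d - c) (b - a) i) (fun i => C ^ i * Hv p q (b - a) (d - c) i)) in T2.
    2: { intros i _. unfold Hv. rewrite H00. ring. }
    rewrite Ekh.
    pose proof (Rm_bound k p q Mn rho a b c d C B ltac:(lra) ltac:(lra) HM0 ltac:(lra) Hp Hq H00 Hk Hkp Hkq HB (S M) b d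
      ltac:(lra) ltac:(lra)) as HR.
    set (S0 := sum_f_R0 (fun i => C ^ i * Hv p q (b - a) (d - c) i) M) in *.
    set (A1 := sum_f_R0 (fun n => phat N C p q (b - a) (d - c) n * (b - a) ^ n) N) in *.
    set (A2 := sum_f_R0 (fun n => phat N C q p (d - c) (b - a) n * (d - c) ^ n) N) in *.
    set (Rr := Rm k p q a c C (S M) b d) in *.
    replace (S0 + Rr - / 2 * (A1 + A2)) with (Rr + (/2 * (S0 - A1) + / 2 * (S0 - A2))) by field.
    eapply Rle_trans. apply Rabs_triang. apply Rplus_le_compat. exact HR.
    eapply Rle_trans. apply Rabs_triang. rewrite !Rabs_mult.
    rewrite (Rabs_pos_eq (/2)) by lra. lra. }
  assert (Hz1 : 0 <= (g + 1) * L) by nra.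
  set (I0a := I0 (2 * sqrt (g * Rabs C) * Delta)).
  set (I0b := I0 (2 * sqrt ((g + 1) * Rabs C) * Delta)).
  assert (EIb : I0b = Series (fun k => ((g + 1) * L) ^ k / (INR (fact k)) ^ 2)).
  { unfold I0b. rewrite I0_eq by nra. apply Series_ext. intros n. unfold L. f_equal. f_equal. ring. }
  assert (HIa : 1 <= I0a).
  { unfold I0a. rewrite I0_eq by nra.
    eapply Rle_trans. 2: apply (ser_ge_first (fun k => (g * Rabs C * Delta ^ 2) ^ k / INR (fact k) ^ 2)).
    simpl. right. field.
    apply ex_I0ser. apply Rmult_le_pos. nra. apply pow_le; lra.
    intros n. apply Rdiv_le_0_compat. apply pow_le. apply Rmult_le_pos. nra. apply pow_le; lra.
    pose proof (fact_pos n). apply pow_lt. lra. }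
  assert (HIb : 0 <= I0b).
  { rewrite EIb. eapply Rle_trans. 2: apply ser_ge_first. simpl. rewrite !Rmult_1_l. unfold Rdiv. rewrite Rinv_1. lra. apply ex_I0ser; auto.
    intros n. apply Rdiv_le_0_compat. apply pow_le; auto. pose proof (fact_pos n). apply pow_lt; lra. }
  assert (HT : T <= th g L (S N) * I0b).
  { rewrite EIb. apply th_tail; auto. }
  assert (Hth : 0 <= th g L (S N)) by (apply th_nonneg; auto).
  assert (Hfin2 : 2 * Mn * T <= 2 * Mn * I0a * I0b *
      (L ^ (N + 1) * (g + 1) ^ (N + 1)) / (INR (fact (N + 1))) ^ 2).
  { fold Mn. rewrite Nat.add_1_r.
    replace (2 * Mn * I0a * I0b * (L ^ S N * (g + 1) ^ S N) / INR (fact (S N)) ^ 2)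
      with (2 * Mn * I0a * (th g L (S N) * I0b)).
    2: { unfold th, L. rewrite Rpow_mult_distr. unfold Rdiv. ring. }
    assert (0 <= th g L (S N) * I0b) by (apply Rmult_le_pos; auto).
    assert (T <= I0a * (th g L (S N) * I0b)) by nra.
    assert (0 <= 2 * Mn) by lra. nra. }
  apply Rle_plus_epsilon. intros eps Heps.
  set (x := Rabs C * (b - a) * (d - c)).
  destruct (cv_speed_pow_fact x (eps / (B + 1))) as [N0 HN0].
  { apply Rdiv_lt_0_compat; lra. }
  set (M := max N0 N).
  specialize (HN0 (S M) ltac:(unfold M; lia)). unfold R_dist in HN0. rewrite Rminus_0_r in HN0.
  eapply Rle_trans. apply (Key M). unfold M; lia.
  assert (Hsm : B * Rabs C ^ S M * pw (b - a) (S M) * pw (d - c) (S M) <= eps).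
  { set (m := S M) in *.
    assert (E : Rabs C ^ m * pw (b - a) m * pw (d - c) m = x ^ m / INR (fact m) * / INR (fact m)).
    { unfold pw, x. rewrite !Rpow_mult_distr. unfold Rdiv. ring. }
    pose proof (fact_ge1 m). pose proof (fact_pos m).
    assert (Hx0 : 0 <= x ^ m / INR (fact m)).
    { apply Rdiv_le_0_compat; auto. apply pow_le. unfold x. apply Rmult_le_pos; [apply Rmult_le_pos|]; lra. }
    rewrite Rabs_pos_eq in HN0 by auto.
    assert (E2 : x ^ m / INR (fact m) * / INR (fact m) <= x ^ m / INR (fact m)).
    { rewrite <- (Rmult_1_r (x ^ m / INR (fact m))) at 2. apply Rmult_le_compat_l; auto.
      rewrite <- Rinv_1. apply Rinv_le_contravar; lra. }
    replace (B * Rabs C ^ m * pw (b - a) m * pw (d - c) m) with (B * (Rabs C ^ m * pw (b - a) m * pw (d - c) m)) by ring.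
    rewrite E.
    apply Rle_trans with (B * (eps / (B + 1))).
    apply Rmult_le_compat_l; auto. lra.
    apply Rle_trans with ((B + 1) * (eps / (B + 1))). nra. right. field. lra. }
  lra.
Qed.
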